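(* Let $Q$ be a Moufang loop with trivial nucleus. Then there exists a unique automorphism $\sigma$ of the multiplication group $\mathrm{Mlt}(Q)$ such that $\sigma(L_x)=R_x$ and $\sigma(R_x)=M_x^{-1}$ for every $x\in Q$, where $M_x=R_xL_x$. This automorphism satisfies $\sigma^3=\mathrm{id}_{\mathrm{Mlt}(Q)}$, and if $\varphi\in\mathrm{Inn}(Q)$ and $c\in Q$ is a companion of $\varphi$ (i.e. $c\varphi(x)\cdot\varphi(y)=c\varphi(xy)$ for all $x,y\in Q$), then $\sigma(\varphi)=R_c^{-1}\varphi$.
   Context: A loop is a magma with identity $1$ in which the left translations $L_x(y)=xy$ and right translations $R_x(y)=yx$ are bijections; it is Moufang if it satisfies $xy\cdot zx=(x\cdot yz)x$. The multiplication group $\mathrm{Mlt}(Q)$ is the permutation group generated by all $L_x,R_x$; the inner mapping group $\mathrm{Inn}(Q)$ is the stabilizer of $1$ in $\mathrm{Mlt}(Q)$. The nucleus is the set of $x$ with $x(yz)=(xy)z$, $y(xz)=(yx)z$, $y(zx)=(yz)x$ for all $y,z$. In a Moufang loop every inner mapping $\varphi$ is a pseudoautomorphism, i.e. has at least one companion $c$ with $c\varphi(x)\cdot\varphi(y)=c\varphi(xy)$ for all $x,y$. *)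

(* Defs.v *)
From mathcomp Require Import ssreflect ssrfun ssrbool.
Set Implicit Arguments. Unset Strict Implicit. Unset Printing Implicit Defensive.

Section LoopDefs.
Variables (T : Type) (mul : T -> T -> T) (one : T).

Definition Lt (x : T) : T -> T := fun y => mul x y.
Definition Rt (x : T) : T -> T := fun y => mul y x.
Definition Mt (x : T) : T -> T := Rt x \o Lt x.

Definition is_loop : Prop :=
  [/\ forall x, mul one x = x, forall x, mul x one = x,
      forall x, bijective (Lt x) & forall x, bijective (Rt x)].

Definition moufang : Prop :=
  forall x y z, mul (mul x y) (mul z x) = mul (mul x (mul y z)) x.

Definition in_nucleus (x : T) : Prop :=
  forall y z, [/\ mul x (mul y z) = mul (mul x y) z,
                  mul y (mul x z) = mul (mul y x) z &
                  mul y (mul z x) = mul (mul y z) x].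

Definition trivial_nucleus : Prop := forall x, in_nucleus x -> x = one.

(* The multiplication group Mlt(Q): the group of permutations of T generated
   by all L_x and R_x (closure under identity, composition and inverses). *)
Inductive Mlt : (T -> T) -> Prop :=
  | Mlt_L x : Mlt (Lt x)
  | Mlt_R x : Mlt (Rt x)
  | Mlt_id : Mlt id
  | Mlt_comp f g : Mlt f -> Mlt g -> Mlt (f \o g)
  | Mlt_inv f g : Mlt f -> cancel f g -> cancel g f -> Mlt g.

Definition Inn (f : T -> T) : Prop := Mlt f /\ f one = one.

Definition companion (phi : T -> T) (c : T) : Prop :=
  forall x y, mul (mul c (phi x)) (phi y) = mul c (phi (mul x y)).

(* sigma is an automorphism of the group Mlt(Q) (only its values on Mlt(Q) matter). *)
Definition Mlt_automorphism (sigma : (T -> T) -> (T -> T)) : Prop :=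
  [/\ forall f, Mlt f -> Mlt (sigma f),
      forall f g, Mlt f -> Mlt g -> sigma (f \o g) = sigma f \o sigma g,
      forall f g, Mlt f -> Mlt g -> sigma f = sigma g -> f = g &
      forall h, Mlt h -> exists2 f, Mlt f & sigma f = h].

Definition inverse_of (g f : T -> T) : Prop := cancel f g /\ cancel g f.

Definition triality_prop (sigma : (T -> T) -> (T -> T)) : Prop :=
  forall x, sigma (Lt x) = Rt x /\ inverse_of (sigma (Rt x)) (Mt x).

End LoopDefs.

(* Main.v *)
Require Import Defs.
From mathcomp Require Import ssreflect ssrfun ssrbool.
From Stdlib Require Import FunctionalExtensionality ClassicalEpsilon.

Set Implicit Arguments. Unset Strict Implicit. Unset Printing Implicit Defensive.

Section Proof.
Variables (T : Type) (mul : T -> T -> T) (one : T).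
Hypotheses (hloop : is_loop mul one) (hmou : moufang mul)
  (hnuc : trivial_nucleus mul one).

Local Notation "x ** y" := (mul x y) (at level 40, left associativity).

Lemma mul1x x : one ** x = x. Proof. by case: hloop. Qed.
Lemma mulx1 x : x ** one = x. Proof. by case: hloop. Qed.
Lemma lbij x : bijective (Lt mul x). Proof. by case: hloop. Qed.
Lemma rbij x : bijective (Rt mul x). Proof. by case: hloop. Qed.

Lemma lcan x y z : x ** y = x ** z -> y = z.
Proof. move=> h; exact: (bij_inj (lbij x) h). Qed.
Lemma rcan x y z : y ** x = z ** x -> y = z.
Proof. move=> h; exact: (bij_inj (rbij x) h). Qed.

Lemma flex x z : x ** (z ** x) = (x ** z) ** x.
Proof. by have := hmou x one z; rewrite mulx1 mul1x. Qed.

Lemma ex_rinv x : { y | x ** y = one }.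
Proof.
apply: constructive_indefinite_description.
case: (lbij x) => g _ K; exists (g one); exact: (K one).
Qed.

Definition inv x := proj1_sig (ex_rinv x).
Lemma mulxV x : x ** inv x = one. Proof. exact: proj2_sig (ex_rinv x). Qed.

Lemma lip1 x z : x ** (inv x ** z) = z.
Proof.
have := hmou x (inv x) z; rewrite mulxV mul1x => h.
by apply: (@rcan x); rewrite h.
Qed.

Lemma mulVx x : inv x ** x = one.
Proof. by apply: (@lcan x); rewrite lip1 mulx1. Qed.

Lemma lip2 x z : inv x ** (x ** z) = z.
Proof. by apply: (@lcan x); rewrite lip1. Qed.

Lemma moufang' x y z : (x ** y) ** (z ** x) = x ** ((y ** z) ** x).
Proof. by rewrite hmou flex. Qed.

Lemma rip1 x y : (y ** inv x) ** x = y.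
Proof.
have := moufang' x y (inv x); rewrite mulVx mulx1 => h.
by apply: (@lcan x); rewrite -h.
Qed.

Lemma rip2 x y : (y ** x) ** inv x = y.
Proof. by apply: (@rcan x); rewrite rip1. Qed.

Lemma invK x : inv (inv x) = x.
Proof. by apply: (@lcan (inv x)); rewrite mulxV mulVx. Qed.

Lemma invM x y : inv (x ** y) = inv y ** inv x.
Proof.
have h : inv (x ** y) ** x = inv y.
  by rewrite -{2}(rip2 y x) lip2.
by rewrite -h rip2.
Qed.

Lemma keyid v w x : (v ** w) ** x = (v ** inv x) ** ((x ** w) ** x).
Proof.
have h := hmou x (inv v) (v ** w); rewrite lip2 in h.
have e : v ** inv x = inv (x ** inv v) by rewrite invM invK.
by rewrite -h e lip2.
Qed.

Lemma rmouf y x w : ((y ** x) ** w) ** x = y ** ((x ** w) ** x).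
Proof. by rewrite keyid rip2. Qed.

Lemma rnuc_one c : (forall y z, y ** (z ** c) = (y ** z) ** c) -> c = one.
Proof.
move=> hr.
have hl' a b : inv c ** (a ** b) = (inv c ** a) ** b.
  have := f_equal inv (hr (inv b) (inv a)).
  by rewrite !invM !invK.
have hl u b : (c ** u) ** b = c ** (u ** b).
  by rewrite -{1}(lip1 c ((c ** u) ** b)) hl' lip2.
apply: hnuc => y z; split.
- by rewrite hl.
- have := rmouf y c (z ** inv c).
  by rewrite -hr rip1 hl rip1.
- exact: hr.
Qed.

Definition atp (a b g : T -> T) := forall y z, a y ** b z = g (y ** z).

Lemma mlt_bij f : Mlt mul f -> bijective f.
Proof.
elim=> [x|x| |f1 g1 _ b1 _ b2|f1 g1 _ _ c1 c2].
- exact: lbij.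
- exact: rbij.
- by exists id.
- exact: bij_comp.
- by exists f1.
Qed.

Lemma atp_uniq a b g b' g' : Mlt mul b -> Mlt mul g ->
  atp a b g -> atp a b' g' -> b' = b.
Proof.
move=> /mlt_bij [bi bK Kb] /mlt_bij [gi gK Kg] h h'.
pose d := bi \o b'. pose e := gi \o g'.
have hde y z : y ** d z = e (y ** z).
  by apply: (can_inj gK); rewrite /d /e /= Kg -h' -h Kb.
have hbd z : b' z = b (d z) by rewrite /d /= Kb.
clearbody d e.
have hdd z : d z = e z by rewrite -[z in e z]mul1x -hde mul1x.
have hc y : d y = y ** d one by rewrite -{1}[y]mulx1 hde hdd.
have c1 : d one = one.
  apply: rnuc_one => y z.
  by rewrite -(hc z) -(hc (y ** z)) hde hdd.
apply: functional_extensionality => z.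
by rewrite hbd hc c1 mulx1.
Qed.
Definition P f b := exists g, [/\ Mlt mul b, Mlt mul g & atp f b g].

Lemma Mt_mlt x : Mlt mul (Mt mul x).
Proof. exact: Mlt_comp (Mlt_R _ _) (Mlt_L _ _). Qed.

Lemma atpL x : atp (Lt mul x) (Rt mul x) (Mt mul x).
Proof. by move=> y z; rewrite /Lt /Rt /Mt /= /Lt /Rt hmou. Qed.

Lemma atpR x mi ri : cancel (Mt mul x) mi -> cancel mi (Mt mul x) ->
  cancel (Rt mul x) ri -> cancel ri (Rt mul x) ->
  atp (Rt mul x) mi ri.
Proof.
move=> mK Km rK Kr y z; apply: (can_inj rK); rewrite Kr.
rewrite -{2}(Km z); move: (mi z) => w.
by rewrite /Rt /Mt /= /Lt /Rt rmouf.
Qed.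

Lemma P_ex f : Mlt mul f -> exists b, P f b.
Proof.
elim=> [x|x| |f1 g1 _ [b1 [c1 [m1 n1 a1]]] _ [b2 [c2 [m2 n2 a2]]]
       |f1 g1 _ [b [c [m n a]]] fK Kf].
- by exists (Rt mul x), (Mt mul x); split; [exact: Mlt_R|exact: Mt_mlt|exact: atpL].
- case: (mlt_bij (Mt_mlt x)) => mi mK Km.
  case: (rbij x) => ri rK Kr.
  exists mi, ri; split; first exact: (Mlt_inv (Mt_mlt x) mK Km).
    exact: (Mlt_inv (Mlt_R _ x) rK Kr).
  exact: atpR.
- by exists id, id; split; [exact: Mlt_id|exact: Mlt_id|].
- exists (b1 \o b2), (c1 \o c2); split; [exact: Mlt_comp|exact: Mlt_comp|].
  by move=> y z /=; rewrite a1 a2.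
- case: (mlt_bij m) => bi bK Kb; case: (mlt_bij n) => ci cK Kc.
  exists bi, ci; split; [exact: (Mlt_inv m bK Kb)|exact: (Mlt_inv n cK Kc)|].
  move=> y z; apply: (can_inj cK).
  by rewrite -a Kf Kb Kc.
Qed.

Lemma P_uniq f b b' : P f b -> P f b' -> b' = b.
Proof. move=> [g [m n a]] [g' [_ _ a']]; exact: (atp_uniq m n a a'). Qed.

Definition sigma f := epsilon (inhabits id) (P f).

Lemma sigmaP f : Mlt mul f -> P f (sigma f).
Proof. move=> /P_ex h; exact: (epsilon_spec (inhabits id) (P f) h). Qed.

Lemma sigma_eq f b : Mlt mul f -> P f b -> sigma f = b.
Proof. move=> /sigmaP h1 h2; exact: P_uniq h2 h1. Qed.

Lemma sigma_mlt f : Mlt mul f -> Mlt mul (sigma f).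
Proof. by move=> /sigmaP [g [m _ _]]. Qed.

Lemma sigmaM f g : Mlt mul f -> Mlt mul g -> sigma (f \o g) = sigma f \o sigma g.
Proof.
move=> mf mg; apply: sigma_eq; first exact: Mlt_comp.
case: (sigmaP mf) => [c1 [m1 n1 a1]]; case: (sigmaP mg) => [c2 [m2 n2 a2]].
exists (c1 \o c2); split; [exact: Mlt_comp|exact: Mlt_comp|].
by move=> y z /=; rewrite a1 a2.
Qed.

Lemma sigma_id : sigma id = id.
Proof. apply: sigma_eq; first exact: Mlt_id. by exists id; split; try exact: Mlt_id. Qed.

Lemma sigmaL x : sigma (Lt mul x) = Rt mul x.
Proof.
apply: sigma_eq; first exact: Mlt_L.
by exists (Mt mul x); split; [exact: Mlt_R|exact: Mt_mlt|exact: atpL].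
Qed.

Lemma sigmaR x : cancel (Mt mul x) (sigma (Rt mul x)) /\ cancel (sigma (Rt mul x)) (Mt mul x).
Proof.
case: (mlt_bij (Mt_mlt x)) => mi mK Km.
case: (rbij x) => ri rK Kr.
suff -> : sigma (Rt mul x) = mi by [].
apply: sigma_eq; first exact: Mlt_R.
exists ri; split; first exact: (Mlt_inv (Mt_mlt x) mK Km).
  exact: (Mlt_inv (Mlt_R _ x) rK Kr).
exact: atpR.
Qed.

Lemma sigma_inv f g : Mlt mul f -> cancel f g -> cancel g f ->
  cancel (sigma f) (sigma g) /\ cancel (sigma g) (sigma f).
Proof.
move=> mf fK Kf; have mg := Mlt_inv mf fK Kf.
have e1 : g \o f = id by apply: functional_extensionality => y; exact: fK.
have e2 : f \o g = id by apply: functional_extensionality => y; exact: Kf.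
split=> y.
- by have := f_equal (fun h => h y) (sigmaM mg mf); rewrite e1 sigma_id.
- by have := f_equal (fun h => h y) (sigmaM mf mg); rewrite e2 sigma_id.
Qed.

Lemma sigma2R x : sigma (sigma (Rt mul x)) = Lt mul x.
Proof.
have [sK Ks] := sigmaR x.
have mM := Mt_mlt x.
have [h1 _] := sigma_inv mM sK Ks.
have eM : sigma (Mt mul x) = sigma (Rt mul x) \o Rt mul x.
  by rewrite /Mt sigmaM ?sigmaL //; [exact: Mlt_R|exact: Mlt_L].
apply: functional_extensionality => y.
have e : sigma (Mt mul x) (Lt mul x y) = y by rewrite eM /= -/(Mt mul x y) sK.
by rewrite -{1}e h1.
Qed.

Lemma sigma3 f : Mlt mul f -> sigma (sigma (sigma f)) = f.
Proof.
elim=> [x|x| |f1 g1 m1 e1 m2 e2|f1 g1 m1 e1 fK Kf].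
- by rewrite sigmaL sigma2R.
- by rewrite sigma2R sigmaL.
- by rewrite !sigma_id.
- have s1 := sigma_mlt m1; have s2 := sigma_mlt m2.
  rewrite (sigmaM m1 m2) (sigmaM s1 s2) (sigmaM (sigma_mlt s1) (sigma_mlt s2)).
  by rewrite e1 e2.
- have [a1 b1] := sigma_inv m1 fK Kf.
  have mg := Mlt_inv m1 fK Kf.
  have [a2 b2] := sigma_inv (sigma_mlt m1) a1 b1.
  have [a3 b3] := sigma_inv (sigma_mlt (sigma_mlt m1)) a2 b2.
  rewrite e1 in a3 b3.
  apply: functional_extensionality => y.
  by rewrite -{1}(Kf y) a3.
Qed.

Lemma tau_id tau : Mlt_automorphism mul tau -> tau id = id.
Proof.
case=> t1 t2 _ _.
have m := t1 _ (Mlt_id mul).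
have [ti tK Kt] := mlt_bij m.
have e := t2 _ _ (Mlt_id mul) (Mlt_id mul).
apply: functional_extensionality => y.
apply: (can_inj tK).
by have := f_equal (fun h => h y) e.
Qed.

Lemma tau_uniq tau : Mlt_automorphism mul tau -> triality_prop mul tau ->
  forall f, Mlt mul f -> tau f = sigma f.
Proof.
move=> ha ht f; have tid := tau_id ha; case: ha => t1 t2 _ _.
elim=> [x|x| |f1 g1 m1 e1 m2 e2|f1 g1 m1 e1 fK Kf].
- by rewrite sigmaL; case: (ht x).
- have [_ [tK Kt]] := ht x; have [sK Ks] := sigmaR x.
  apply: functional_extensionality => y.
  by rewrite -{1}(Ks y) tK.
- by rewrite tid sigma_id.
- by rewrite t2 // sigmaM // e1 e2.
- have mg := Mlt_inv m1 fK Kf.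
  have [_ b1] := sigma_inv m1 fK Kf.
  have e : tau g1 \o tau f1 = id.
    rewrite -t2 //.
    have -> : g1 \o f1 = id by apply: functional_extensionality => y; exact: fK.
    exact: tid.
  apply: functional_extensionality => y.
  rewrite -{1}(b1 y) -e1.
  by have := f_equal (fun h => h (sigma g1 y)) e.
Qed.

Lemma sigma_companion phi c rcinv : Inn mul one phi -> companion mul phi c ->
  inverse_of rcinv (Rt mul c) -> sigma phi = rcinv \o phi.
Proof.
move=> [mp _] hc [rK Kr].
have mlp : Mlt mul (Lt mul c \o phi) by apply: Mlt_comp => //; exact: Mlt_L.
have e : sigma (Lt mul c \o phi) = phi.
  apply: sigma_eq => //; exists (Lt mul c \o phi); split => //.
rewrite (sigmaM (Mlt_L _ c) mp) sigmaL in e.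
apply: functional_extensionality => y.
by have := f_equal (fun h => rcinv (h y)) e; rewrite /= rK.
Qed.

End Proof.

Theorem lemma6p3 (T : Type) (mul : T -> T -> T) (one : T)
  (hloop : is_loop mul one) (hmou : moufang mul)
  (hnuc : trivial_nucleus mul one) :
  exists sigma : (T -> T) -> (T -> T),
    [/\ Mlt_automorphism mul sigma /\ triality_prop mul sigma,
        (forall tau, Mlt_automorphism mul tau -> triality_prop mul tau ->
           forall f, Mlt mul f -> tau f = sigma f),
        (forall f, Mlt mul f -> sigma (sigma (sigma f)) = f) &
        (forall phi c rcinv, Inn mul one phi -> companion mul phi c ->
           inverse_of rcinv (Rt mul c) -> sigma phi = rcinv \o phi)].
Proof.
exists (sigma mul); split.
- split.
  + split.
    * exact: (@sigma_mlt _ _ _ hloop hmou).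
    * exact: (@sigmaM _ _ _ hloop hmou hnuc).
    * move=> f g mf mg e.
      by rewrite -(@sigma3 _ _ _ hloop hmou hnuc _ mf) -(@sigma3 _ _ _ hloop hmou hnuc _ mg) e.
    * move=> h mh; exists (sigma mul (sigma mul h)).
        by do 2 apply: (@sigma_mlt _ _ _ hloop hmou).
      exact: (@sigma3 _ _ _ hloop hmou hnuc).
  + move=> x; split; first exact: (sigmaL hloop hmou hnuc).
    exact: (sigmaR hloop hmou hnuc).
- exact: (@tau_uniq _ _ _ hloop hmou hnuc).
- exact: (@sigma3 _ _ _ hloop hmou hnuc).
- exact: (@sigma_companion _ _ _ hloop hmou hnuc).
Qed.
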